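(* For each $\{\cup,\cap,\bot,\{0\},\min,\max,l,r\}$-formula $\phi(\bar{X})$ there is a $\{\cup,\cap,\bot,\{0\},\min,\max,\mathrm{ips}\}$-formula $\psi(\bar{Y})$ such that for each tuple $\bar{A}$ of finite unions of closed intervals of $I$, \[ L(I) \models \phi(\bar{A}) \Longleftrightarrow W(I) \models \psi(\overline{l(A)},\overline{r(A)}), \] where $l(A)$ and $r(A)$ denote the sets of left and right endpoints of $A$.
   Context: Let $I$ be a dense linear order with a left endpoint $0$ and no right endpoint. $W(I)$ is the structure in the signature $\{\cup,\cap,\bot,\{0\},\min,\max,\mathrm{ips}\}$ whose universe is the collection of finite subsets of $I$, with $\cup,\cap$ union and intersection, $\bot$ the empty set, the constant $\{0\}$ interpreted as the singleton of the left endpoint, $\min$ and $\max$ sending a nonempty finite set to the singleton of its minimum (resp. maximum) and fixing $\emptyset$, and $\mathrm{ips}$ the binary function $\mathrm{ips}(A,B)=\{i\in A : \text{the successor of } i \text{ in } A \text{ (in the induced order) exists and lies in } B\}$. $L(I)$ is the structure in the signature $\{\cup,\cap,\bot,\{0\},\min,\max,l,r\}$ whose universe is the collection of finite unions of closed intervals of $I$ (closed intervals being sets of the form $[i,j]$, $[i,+\infty)$, $(-\infty,j]$), with $\cup,\cap$ union and intersection, $\bot$ the empty set, $\{0\}$ the singleton of the left endpoint, $\min$ and $\max$ sending a set to the singleton of its minimum (resp. maximum), with $\min(\emptyset)=\max(\emptyset)=\emptyset$ and $\max(A)=\emptyset$ for unbounded $A$, and $l$, $r$ sending a set to the set of its left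 (resp. right) endpoints. *)

(* Defs.v *)
From mathcomp Require Import all_boot all_order.
Set Implicit Arguments. Unset Strict Implicit. Unset Printing Implicit Defensive.
Import Order.TTheory.
Local Open Scope order_scope.

Section Defs.
Variables (d : Order.disp_t) (T : orderType d).

Definition pset := T -> Prop.
Definition env := nat -> pset.

Definition pset0 : pset := fun _ => False.
Definition psetU (A B : pset) : pset := fun x => A x \/ B x.
Definition psetI (A B : pset) : pset := fun x => A x /\ B x.
Definition pset1 (a : T) : pset := fun x => x = a.

Definition pmin (A : pset) : pset := fun x => A x /\ forall y, A y -> x <= y.
Definition pmax (A : pset) : pset := fun x => A x /\ forall y, A y -> y <= x.

Definition lends (A : pset) : pset :=
  fun x => A x /\ ~ (exists y, y < x /\ forall w, y <= w <= x -> A w).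
Definition rends (A : pset) : pset :=
  fun x => A x /\ ~ (exists y, x < y /\ forall w, x <= w <= y -> A w).

Definition ips (A B : pset) : pset :=
  fun i => A i /\ exists j, [/\ A j, i < j, (forall k, A k -> i < k -> j <= k) & B j].

(* universe of W(I): finite subsets of I *)
Definition finite_pset (A : pset) : Prop :=
  exists s : seq T, forall x, A x <-> x \in s.

Inductive cival := CI of T & T | CRay of T | CLray of T.
Definition cival_set (J : cival) : pset :=
  match J with
  | CI i j => fun x => i <= x <= j
  | CRay i => fun x => i <= x
  | CLray j => fun x => x <= j
  end.

(* universe of L(I): finite unions of closed intervals *)
Definition fucl (A : pset) : Prop :=
  exists (n : nat) (f : nat -> cival),
    forall x, A x <-> exists k, (k < n)%N /\ cival_set (f k) x.

Definition scons (A : pset) (rho : env) : env :=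
  fun k => match k with O => A | S k' => rho k' end.
End Defs.

(* first-order formulas (equality is the only relation symbol), de Bruijn variables *)
Inductive fo (Tm : Type) :=
  | FEq of Tm & Tm
  | FNot of fo Tm
  | FAnd of fo Tm & fo Tm
  | FOr of fo Tm & fo Tm
  | FImp of fo Tm & fo Tm
  | FEx of fo Tm
  | FAll of fo Tm.

Inductive Lterm :=
  | LVar of nat | LCup of Lterm & Lterm | LCap of Lterm & Lterm | LBot | LZero
  | LMin of Lterm | LMax of Lterm | LL of Lterm | LR of Lterm.

Inductive Wterm :=
  | WVar of nat | WCup of Wterm & Wterm | WCap of Wterm & Wterm | WBot | WZero
  | WMin of Wterm | WMax of Wterm | WIps of Wterm & Wterm.

Section Sem.
Variables (d : Order.disp_t) (T : orderType d) (z : T).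

Fixpoint evalL (rho : env T) (t : Lterm) : pset T :=
  match t with
  | LVar n => rho n
  | LCup a b => psetU (evalL rho a) (evalL rho b)
  | LCap a b => psetI (evalL rho a) (evalL rho b)
  | LBot => @pset0 _ T
  | LZero => pset1 z
  | LMin a => pmin (evalL rho a)
  | LMax a => pmax (evalL rho a)
  | LL a => lends (evalL rho a)
  | LR a => rends (evalL rho a)
  end.

Fixpoint evalW (rho : env T) (t : Wterm) : pset T :=
  match t with
  | WVar n => rho n
  | WCup a b => psetU (evalW rho a) (evalW rho b)
  | WCap a b => psetI (evalW rho a) (evalW rho b)
  | WBot => @pset0 _ T
  | WZero => pset1 z
  | WMin a => pmin (evalW rho a)
  | WMax a => pmax (evalW rho a)
  | WIps a b => ips (evalW rho a) (evalW rho b)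
  end.

Fixpoint sat (Tm : Type) (D : pset T -> Prop) (ev : env T -> Tm -> pset T)
    (rho : env T) (f : fo Tm) : Prop :=
  match f with
  | FEq a b => forall x, ev rho a x <-> ev rho b x
  | FNot g => ~ sat D ev rho g
  | FAnd g h => sat D ev rho g /\ sat D ev rho h
  | FOr g h => sat D ev rho g \/ sat D ev rho h
  | FImp g h => sat D ev rho g -> sat D ev rho h
  | FEx g => exists A, D A /\ sat D ev (scons A rho) g
  | FAll g => forall A, D A -> sat D ev (scons A rho) g
  end.

Definition satL (rho : env T) (phi : fo Lterm) := sat (@fucl _ T) evalL rho phi.
Definition satW (rho : env T) (psi : fo Wterm) := sat (@finite_pset _ T) evalW rho psi.
End Sem.

(* the variable Y_{2k} of psi receives l(A_k), Y_{2k+1} receives r(A_k) *)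
Definition endpoint_env d (T : orderType d) (rho : env T) : env T :=
  fun k => if odd k then rends (rho k./2) else lends (rho k./2).

(* Main.v *)
Require Import Defs.
From mathcomp Require Import all_boot all_order.
From Stdlib Require Import Classical FunctionalExtensionality PropExtensionality.
Import Order.TTheory.
Set Implicit Arguments. Unset Strict Implicit. Unset Printing Implicit Defensive.
Local Open Scope order_scope.

Fixpoint renT (f : nat -> nat) (t : Wterm) : Wterm :=
  match t with
  | WVar n => WVar (f n)
  | WCup a b => WCup (renT f a) (renT f b)
  | WCap a b => WCap (renT f a) (renT f b)
  | WBot => WBot | WZero => WZero
  | WMin a => WMin (renT f a) | WMax a => WMax (renT f a)
  | WIps a b => WIps (renT f a) (renT f b)
  end.
Definition upr (f : nat -> nat) : nat -> nat :=
  fun k => match k with 0 => 0 | S k' => S (f k') end.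
Fixpoint renF (f : nat -> nat) (p : fo Wterm) : fo Wterm :=
  match p with
  | FEq a b => FEq (renT f a) (renT f b)
  | FNot g => FNot (renF f g)
  | FAnd g h => FAnd (renF f g) (renF f h)
  | FOr g h => FOr (renF f g) (renF f h)
  | FImp g h => FImp (renF f g) (renF f h)
  | FEx g => FEx (renF (upr f) g)
  | FAll g => FAll (renF (upr f) g)
  end.

Section W.
Variables (d : Order.disp_t) (T : orderType d) (z : T).

Lemma renT_ok f (s : env T) t : evalW z s (renT f t) = evalW z (fun k => s (f k)) t.
Proof. elim: t => //= [a IHa b IHb|a IHa b IHb|a IHa|a IHa|a IHa b IHb]; by rewrite ?IHa ?IHb. Qed.

Lemma scons_upr (A : pset T) (s : env T) f :
  (fun k => scons A s (upr f k)) = scons A (fun k => s (f k)).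
Proof. apply: functional_extensionality => -[|k] //. Qed.

Lemma renF_ok p : forall f (s : env T), satW z s (renF f p) <-> satW z (fun k => s (f k)) p.
Proof.
rewrite /satW.
elim: p => [a b|g IH|g IHg h IHh|g IHg h IHh|g IHg h IHh|g IH|g IH] f s /=.
- by rewrite !renT_ok.
- by rewrite IH.
- by rewrite IHg IHh.
- by rewrite IHg IHh.
- by rewrite IHg IHh.
- split=> -[A [HA H]]; exists A; split=> //; move: H; by rewrite IH scons_upr.
- split=> H A HA; move: (H A HA); by rewrite IH scons_upr.
Qed.

Definition Def (P : env T -> Prop) := exists psi, forall s, P s <-> satW z s psi.

Lemma Def_ext P Q : (forall s, Q s <-> P s) -> Def P -> Def Q.
Proof. move=> H [psi Hp]; exists psi => s; by rewrite H. Qed.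

Lemma Def_and P Q : Def P -> Def Q -> Def (fun s => P s /\ Q s).
Proof. move=> [p Hp] [q Hq]; exists (FAnd p q) => s; rewrite /satW /=; by rewrite Hp Hq. Qed.
Lemma Def_or P Q : Def P -> Def Q -> Def (fun s => P s \/ Q s).
Proof. move=> [p Hp] [q Hq]; exists (FOr p q) => s; rewrite /satW /=; by rewrite Hp Hq. Qed.
Lemma Def_imp P Q : Def P -> Def Q -> Def (fun s => P s -> Q s).
Proof. move=> [p Hp] [q Hq]; exists (FImp p q) => s; rewrite /satW /=; by rewrite Hp Hq. Qed.
Lemma Def_not P : Def P -> Def (fun s => ~ P s).
Proof. move=> [p Hp]; exists (FNot p) => s; rewrite /satW /=; by rewrite Hp. Qed.
Lemma Def_iff P Q : Def P -> Def Q -> Def (fun s => P s <-> Q s).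
Proof. move=> HP HQ; apply: Def_ext (Def_and (Def_imp HP HQ) (Def_imp HQ HP)) => s; tauto. Qed.
Lemma Def_ex P : Def P -> Def (fun s => exists A, finite_pset A /\ P (scons A s)).
Proof. move=> [p Hp]; exists (FEx p) => s; rewrite /satW /=.
split=> -[A [HA H]]; exists A; split=> //; by apply/Hp. Qed.
Lemma Def_all P : Def P -> Def (fun s => forall A, finite_pset A -> P (scons A s)).
Proof. move=> [p Hp]; exists (FAll p) => s; rewrite /satW /=.
split=> H A HA; by apply/Hp/H. Qed.
Lemma Def_ren P (g : env T -> env T) f : (forall s k, g s k = s (f k)) -> Def P -> Def (fun s => P (g s)).
Proof. move=> Hg [p Hp]; exists (renF f p) => s; rewrite renF_ok -Hp.
suff -> : g s = (fun k => s (f k)) by []. by apply: functional_extensionality. Qed.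
Lemma Def_eqW a b : Def (fun s => forall x, evalW z s a x <-> evalW z s b x).
Proof. by exists (FEq a b). Qed.
Lemma Def_true : Def (fun _ => True).
Proof. apply: Def_ext (Def_eqW WBot WBot) => s; split=> // _ x; tauto. Qed.
Lemma Def_false : Def (fun _ => False).
Proof. apply: Def_ext (Def_not Def_true) => s; tauto. Qed.

Definition issing (A : pset T) := exists x, forall y, A y <-> y = x.
Lemma Def_sing i : Def (fun s => issing (s i)).
Proof.
apply: Def_ext (Def_and (Def_not (Def_eqW (WVar i) WBot)) (Def_eqW (WMin (WVar i)) (WVar i))) => s /=.
split.
- move=> [x Hx]; split.
  + move=> H; case: (H x) => /(_ (proj2 (Hx x) erefl)) //.
  + move=> y; split; first by case.
    move=> Hy; split=> // w Hw; move: Hy Hw; rewrite !Hx => -> ->; exact: lexx.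
- move=> [Hne Hm].
  have [x Hx] : exists x, s i x.
    apply: NNPP => H; apply: Hne => x; split=> // Hx; apply: H; by exists x.
  exists x => y; split; last by move=> ->.
  move=> Hy; apply/le_anti/andP; split.
  + by case: (proj2 (Hm y) Hy) => _ /(_ x Hx).
  + by case: (proj2 (Hm x) Hx) => _ /(_ y Hy).
Qed.

Definition le_set (A B : pset T) := forall a, pmin (psetU A B) a <-> A a.
Lemma Def_le i j : Def (fun s => le_set (s i) (s j)).
Proof. exact: (Def_eqW (WMin (WCup (WVar i) (WVar j))) (WVar i)). Qed.
Lemma le_set_pt x y : le_set (pset1 x) (pset1 y) <-> x <= y.
Proof.
rewrite /le_set /pmin /psetU /pset1; split.
- move=> H; case: (proj2 (H x) erefl) => _; apply; by right.
- move=> Hxy a; split.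
  + move=> [[->|->] Hm] //; apply/le_anti/andP; split=> //; apply: Hm; by left.
  + move=> ->; split; first by left.
    move=> w [->|->] //; exact: lexx.
Qed.
Definition sub_set (A B : pset T) := forall a, psetI A B a <-> A a.
Lemma Def_sub i j : Def (fun s => sub_set (s i) (s j)).
Proof. exact: (Def_eqW (WCap (WVar i) (WVar j)) (WVar i)). Qed.
Lemma sub_set_pt x B : sub_set (pset1 x) B <-> B x.
Proof.
rewrite /sub_set /psetI /pset1; split.
- by move=> H; case: (proj2 (H x) erefl) => _.
- move=> Hx a; split; [by case | by move=> ->].
Qed.

Lemma issingE A : issing A -> exists x, A = pset1 x.
Proof. move=> [x Hx]; exists x; apply: functional_extensionality => y;
apply: propositional_extensionality; exact: Hx. Qed.
Lemma fin1 (x : T) : finite_pset (pset1 x).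
Proof. exists [:: x] => y; rewrite /pset1 inE; split; [by move=> ->|by move/eqP]. Qed.

Lemma Def_pex P : Def P -> Def (fun s => exists x, P (scons (pset1 x) s)).
Proof.
move=> HP; apply: Def_ext (Def_ex (Def_and (Def_sing 0) HP)) => s /=; split.
- move=> [x Hx]; exists (pset1 x); split; first exact: fin1.
  split=> //; by exists x.
- move=> [A [_ [/issingE [x ->] H]]]; by exists x.
Qed.
Lemma Def_pall P : Def P -> Def (fun s => forall x, P (scons (pset1 x) s)).
Proof.
move=> HP; apply: Def_ext (Def_all (Def_imp (Def_sing 0) HP)) => s /=; split.
- move=> H A _ /issingE [x ->]; exact: H.
- move=> H x; apply: H; first exact: fin1. by exists x.
Qed.
End W.

Section O.
Variables (d : Order.disp_t) (T : orderType d) (z : T).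
Hypothesis hz : forall x : T, z <= x.
Hypothesis hnomax : forall x : T, exists y : T, x < y.

Lemma ex_best (r : T -> T -> Prop) (rtot : forall a b, r a b \/ r b a)
  (rtr : forall a b c, r a b -> r b c -> r a c) (P : T -> Prop) (s : seq T) :
  (exists x, x \in s /\ P x) ->
  exists m, [/\ m \in s, P m & forall e, e \in s -> P e -> r e m].
Proof.
have rrefl : forall a, r a a by move=> a; case: (rtot a a).
elim: s => [|a s IH] [x [Hx Px]]; first by rewrite in_nil in Hx.
case: (classic (exists x, x \in s /\ P x)) => [Hs|Hs].
- case: (IH Hs) => m [ms Pm Hm]; case: (classic (P a)) => Pa.
  + case: (rtot a m) => Ham.
    * exists m; split; [by rewrite inE ms orbT | done |].
      move=> e; rewrite inE => /orP [/eqP -> _ //| es Pe]; exact: Hm.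
    * exists a; split; [by rewrite inE eqxx | done |].
      move=> e; rewrite inE => /orP [/eqP -> _ //| es Pe]; exact: rtr (Hm e es Pe) Ham.
  + exists m; split; [by rewrite inE ms orbT | done |].
    move=> e; rewrite inE => /orP [/eqP -> //| es Pe]; exact: Hm.
- have Pa : P a.
    move: Hx; rewrite inE => /orP [/eqP <- //| xs]; exfalso; apply: Hs; by exists x.
  exists a; split; [by rewrite inE eqxx | done |].
  move=> e; rewrite inE => /orP [/eqP -> _ //| es Pe]; exfalso; apply: Hs; by exists e.
Qed.

Lemma ex_max (P : T -> Prop) (s : seq T) : (exists x, x \in s /\ P x) ->
  exists m, [/\ m \in s, P m & forall e, e \in s -> P e -> e <= m].
Proof.
apply: ex_best; first (move=> a b; case/orP: (le_total a b); auto).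
move=> a b c; exact: le_trans.
Qed.
Lemma ex_min (P : T -> Prop) (s : seq T) : (exists x, x \in s /\ P x) ->
  exists m, [/\ m \in s, P m & forall e, e \in s -> P e -> m <= e].
Proof.
apply: (@ex_best (fun a b => b <= a)); first (move=> a b; case/orP: (le_total a b); auto).
move=> a b c h1 h2; exact: le_trans h2 h1.
Qed.

Lemma finite_sub (P : pset T) (s : seq T) : (forall x, P x -> x \in s) -> finite_pset P.
Proof.
elim: s P => [|a s IH] P H.
- exists [::] => x; split=> // /H; by rewrite in_nil.
- case: (IH (fun x => P x /\ x != a)).
    move=> x [Px ne]; have := H x Px; by rewrite inE (negbTE ne).
  move=> s' Hs'; case: (classic (P a)) => Pa.
  + exists (a :: s') => x; rewrite inE; split.
    * move=> Px; case: (eqVneq x a) => [->|ne] /=; first by rewrite ?eqxx.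
      apply/Hs'; by split.
    * case/orP => [/eqP -> //| /Hs' []] //.
  + exists s' => x; rewrite -Hs'; split; last by case.
    move=> Px; split=> //; apply/eqP => e; subst; contradiction.
Qed.

Definition lo (J : cival T) : T := match J with CI i _ => i | CRay i => i | CLray _ => z end.
Definition hi (J : cival T) : option T :=
  match J with CI _ j => Some j | CRay _ => None | CLray j => Some j end.

Lemma cival_shape J x : cival_set J x <-> lo J <= x /\ (forall j, hi J = Some j -> x <= j).
Proof.
case: J => [i j|i|j] /=; split.
- move/andP => [a b]; split=> // j' [<-] //.
- move=> [a b]; apply/andP; split=> //; exact: b.
- move=> a; split=> // j' //.
- by case.
- move=> b; split; [exact: hz | by move=> j' [<-]].
- move=> [_ b]; exact: b.
Qed.

Definition ends_of (n : nat) (f : nat -> cival T) : seq T :=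
  flatten [seq lo (f k) :: (if hi (f k) is Some j then [:: j] else [::]) | k <- iota 0 n].

Lemma lo_in n f k : (k < n)%N -> lo (f k) \in ends_of n f.
Proof. move=> kn; apply/flatten_mapP; exists k; [by rewrite mem_iota add0n | exact: mem_head]. Qed.
Lemma hi_in n f k j : (k < n)%N -> hi (f k) = Some j -> j \in ends_of n f.
Proof. move=> kn H; apply/flatten_mapP; exists k; [by rewrite mem_iota add0n | by rewrite H !inE eqxx orbT]. Qed.

Section Fix.
Variables (A : pset T) (n : nat) (f : nat -> cival T).
Hypothesis HA : forall x, A x <-> exists k, (k < n)%N /\ cival_set (f k) x.

Lemma in_A k x : (k < n)%N -> lo (f k) <= x -> (forall j, hi (f k) = Some j -> x <= j) -> A x.
Proof. move=> kn h1 h2; apply/HA; exists k; split=> //; exact/cival_shape. Qed.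

Lemma lends_sub x : lends A x -> x \in ends_of n f.
Proof.
move=> [Ax Hn]; case: (proj1 (HA x) Ax) => k [kn /cival_shape [Hlo Hhi]].
case: (leP x (lo (f k))) => h.
- have -> : x = lo (f k) by apply/le_anti/andP.
  exact: lo_in.
- exfalso; apply: Hn; exists (lo (f k)); split=> // w /andP [h1 h2].
  apply: (in_A kn h1) => j Hj; exact: le_trans h2 (Hhi j Hj).
Qed.

Lemma rends_sub x : rends A x -> x \in ends_of n f.
Proof.
move=> [Ax Hn]; case: (proj1 (HA x) Ax) => k [kn /cival_shape [Hlo Hhi]].
case Hk: (hi (f k)) => [j|].
- have hxj := Hhi j Hk; case: (leP j x) => h.
  + have -> : x = j by apply/le_anti/andP.
    exact: hi_in Hk.
  + exfalso; apply: Hn; exists j; split=> // w /andP [h1 h2].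
    apply: (in_A kn (le_trans Hlo h1)) => j'; rewrite Hk => -[<-] //.
- case: (hnomax x) => y hxy.
  exfalso; apply: Hn; exists y; split=> // w /andP [h1 h2].
  apply: (in_A kn (le_trans Hlo h1)) => j'; by rewrite Hk.
Qed.

Lemma lends_fin : finite_pset (lends A).
Proof. exact: finite_sub lends_sub. Qed.
Lemma rends_fin : finite_pset (rends A).
Proof. exact: finite_sub rends_sub. Qed.

End Fix.

Definition decode (L R : pset T) : pset T :=
  fun x => exists a, L a /\ (a <= x /\ forall b, R b -> a <= b -> x <= b).

Lemma decode_ends A : fucl A -> decode (lends A) (rends A) = A.
Proof.
move=> [n [f HA]].
apply: functional_extensionality => x; apply: propositional_extensionality; split.
- move=> [a [[Aa Hla] [hax Hb]]]; apply: NNPP => nAx.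
  have hax' : a < x.
    rewrite lt_neqAle hax andbT; apply/eqP => e; subst; contradiction.
  have [m [mE [ham [hmx Hm]] Hmax]] : exists m, [/\ m \in a :: ends_of n f,
      (a <= m /\ m < x /\ forall w, a <= w <= m -> A w) &
      forall e, e \in a :: ends_of n f -> (a <= e /\ e < x /\ forall w, a <= w <= e -> A w) -> e <= m].
    apply: ex_max; exists a; split; first by rewrite inE eqxx.
    split; first exact: lexx. split=> // w hw.
    have -> : w = a by apply/le_anti; rewrite andbC.
    done.
  have Hrm : rends A m.
    split; first by apply: Hm; rewrite ham lexx.
    move=> [y [hmy Hy]].
    case: (leP x y) => hxy.
    + apply: nAx; apply: Hy; by rewrite (ltW hmx) hxy.
    + have Ay : A y by apply: Hy; rewrite (ltW hmy) lexx.
      case: (proj1 (HA y) Ay) => k [kn /cival_shape [hlo hhi]].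
      case Hk: (hi (f k)) => [j|].
      * have hyj := hhi j Hk; case: (leP x j) => hxj.
        -- apply: nAx; apply: (in_A HA kn (le_trans hlo (ltW hxy))) => j'; rewrite Hk => -[<-] //.
        -- have jE : j \in a :: ends_of n f by rewrite inE (hi_in kn Hk) orbT.
           have hjm : j <= m.
             apply: Hmax jE _; split; first exact: le_trans ham (le_trans (ltW hmy) hyj).
             split=> // w /andP [h1 h2].
             case: (leP w m) => hwm; first by apply: Hm; rewrite h1 hwm.
             case: (leP w y) => hwy; first by apply: Hy; rewrite (ltW hwm) hwy.
             apply: (in_A HA kn (le_trans hlo (ltW hwy))) => j'; rewrite Hk => -[<-] //.
           have := lt_le_trans hmy hyj; by rewrite ltNge hjm.
      * apply: nAx; apply: (in_A HA kn (le_trans hlo (ltW hxy))) => j'; by rewrite Hk.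
  have := Hb m Hrm ham; by rewrite leNgt hmx.
- move=> Ax.
  have [m [mE [hmx Hm] Hmin]] : exists m, [/\ m \in x :: ends_of n f,
      (m <= x /\ forall w, m <= w <= x -> A w) &
      forall e, e \in x :: ends_of n f -> (e <= x /\ forall w, e <= w <= x -> A w) -> m <= e].
    apply: ex_min; exists x; split; first by rewrite inE eqxx.
    split; first exact: lexx. move=> w hw.
    have -> : w = x by apply/le_anti; rewrite andbC.
    done.
  exists m; split; last split=> //.
  + split; first by apply: Hm; rewrite hmx lexx.
    move=> [y [hym Hy]].
    have Ay : A y by apply: Hy; rewrite (ltW hym) lexx.
    case: (proj1 (HA y) Ay) => k [kn /cival_shape [hlo hhi]].
    have iE : lo (f k) \in x :: ends_of n f by rewrite inE (lo_in f kn) orbT.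
    have him : m <= lo (f k).
      apply: Hmin iE _; split; first exact: le_trans hlo (le_trans (ltW hym) hmx).
      move=> w /andP [h1 h2].
      case: (leP w y) => hwy.
      * apply: (in_A HA kn h1) => j Hj; exact: le_trans hwy (hhi j Hj).
      * case: (leP w m) => hwm; first by apply: Hy; rewrite (ltW hwy) hwm.
        apply: Hm; by rewrite (ltW hwm) h2.
    have := le_lt_trans (le_trans him hlo) hym; by rewrite ltxx.
  + move=> b [Ab Hnb] hmb; case: (leP x b) => // hbx; exfalso; apply: Hnb.
    exists x; split=> // w /andP [h1 h2]; apply: Hm; by rewrite (le_trans hmb h1) h2.
Qed.

Lemma decode_fucl L R : finite_pset L -> finite_pset R -> fucl (decode L R).
Proof.
move=> [sL HL] [sR HR].
have comp : forall a, exists J, forall x,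
    (a <= x /\ forall b, R b -> a <= b -> x <= b) <-> cival_set J x.
  move=> a; case: (classic (exists b, b \in sR /\ a <= b)) => H.
  - case: (ex_min H) => b0 [b0s hab0 Hmin]; exists (CI a b0) => x /=; split.
    + move=> [hax Hb]; rewrite hax /=; apply: Hb => //; exact/HR.
    + move=> /andP [hax hxb]; split=> // b Rb hab; apply: le_trans hxb (Hmin b _ hab); exact/HR.
  - exists (CRay a) => x /=; split; first by case.
    move=> hax; split=> // b Rb hab; exfalso; apply: H; exists b; split=> //; exact/HR.
have : exists n (f : nat -> cival T), forall x,
    (exists a, a \in sL /\ (a <= x /\ forall b, R b -> a <= b -> x <= b)) <->
    exists k, (k < n)%N /\ cival_set (f k) x.
  elim: sL {HL} => [|a sL [n [f Hf]]].
  - exists 0%N, (fun _ => CRay z) => x; split; first by case=> a []; rewrite in_nil.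
    by case=> k [].
  - case: (comp a) => J HJ.
    exists n.+1, (fun k => if k is k'.+1 then f k' else J) => x; split.
    + move=> [a' [ina' Hc]]; move: ina'; rewrite inE => /orP [/eqP e|ina'].
      * subst a'; exists 0%N; split=> //; exact/HJ.
      * case: (proj1 (Hf x)); first by exists a'.
        move=> k [kn Hk]; by exists k.+1.
    + move=> [[|k] [kn Hk]].
      * exists a; split; [by rewrite inE eqxx | exact/HJ].
      * case: (proj2 (Hf x)); first by exists k.
        move=> a' [ina' Hc]; exists a'; split=> //; by rewrite inE ina' orbT.
move=> [n [f Hf]]; exists n, f => x; rewrite -Hf /decode.
split=> -[a [La Hc]]; exists a; split=> //; exact/HL.
Qed.

Definition decenv (s : env T) : env T := fun k => decode (s (double k)) (s (S (double k))).

Lemma decenv_scons L R s : decenv (scons L (scons R s)) = scons (decode L R) (decenv s).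
Proof. by apply: functional_extensionality => -[|k]. Qed.

Lemma decenv_endpoint rho : (forall k, fucl (rho k)) -> decenv (endpoint_env rho) = rho.
Proof.
move=> Hr; apply: functional_extensionality => k.
rewrite /decenv /endpoint_env /= odd_double /= half_double uphalf_double.
exact: decode_ends.
Qed.

End O.

Section Tr.
Variables (d : Order.disp_t) (T : orderType d) (z : T).
Hypothesis hz : forall x : T, z <= x.
Hypothesis hnomax : forall x : T, exists y : T, x < y.

Notation Def := (Def z).

Lemma Def_keep0 m P : Def P -> Def (fun s => P (scons (s 0) (fun k => s (iter m S k)))).
Proof.
move=> HP; apply: (Def_ren (f := fun k => if k is k'.+1 then iter m S k' else 0)) HP.
by move=> s [|k].
Qed.

Definition TermDef (t : Lterm) := exists P, Def P /\
  forall (s : env T) x, P (scons (pset1 x) s) <-> evalL z (decenv s) t x.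

Lemma termdef t : TermDef t.
Proof.
elim: t => [n|a [Pa [HPa Ha]] b [Pb [HPb Hb]]|a [Pa [HPa Ha]] b [Pb [HPb Hb]]| | 
           |a [Pa [HPa Ha]]|a [Pa [HPa Ha]]|a [Pa [HPa Ha]]|a [Pa [HPa Ha]]].
- eexists; split.
    apply: (Def_pex (Def_and (Def_sub z 0 (S (S (double n))))
              (Def_and (Def_le z 0 1)
                 (Def_pall (Def_imp (Def_sub z 0 (S (S (S (S (double n))))))
                    (Def_imp (Def_le z 1 0) (Def_le z 2 0))))))).
  move=> s x /=; rewrite /decenv /decode; split.
  + move=> [a [/sub_set_pt La [/le_set_pt hax Hb]]]; exists a; split=> //; split=> // b Rb hab.
    apply/le_set_pt; apply: Hb; [exact/sub_set_pt | exact/le_set_pt].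
  + move=> [a [La [hax Hb]]]; exists a; split; first exact/sub_set_pt.
    split; first exact/le_set_pt.
    move=> b /sub_set_pt Rb /le_set_pt hab; apply/le_set_pt; exact: Hb.
- exists (fun s => Pa s \/ Pb s); split; first exact: Def_or.
  by move=> s x /=; rewrite Ha Hb.
- exists (fun s => Pa s /\ Pb s); split; first exact: Def_and.
  by move=> s x /=; rewrite Ha Hb.
- exists (fun _ => False); split; first exact: Def_false.
  by move=> s x.
- eexists; split; first exact: (Def_eqW z (WVar 0) WZero).
  move=> s x /=; rewrite /pset1; split; first by move=> H; apply/H.
  by move=> -> y.
- eexists; split.
    apply: (Def_and HPa (Def_pall (Def_imp (Def_keep0 2 HPa) (Def_le z 1 0)))).
  move=> s x /=; rewrite Ha /pmin; split.
  + move=> [Ax H]; split=> // y Ay; apply/le_set_pt; apply: H; by rewrite Ha.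
  + move=> [Ax H]; split=> // y; rewrite Ha => Ay; apply/le_set_pt; exact: H.
- eexists; split.
    apply: (Def_and HPa (Def_pall (Def_imp (Def_keep0 2 HPa) (Def_le z 0 1)))).
  move=> s x /=; rewrite Ha /pmax; split.
  + move=> [Ax H]; split=> // y Ay; apply/le_set_pt; apply: H; by rewrite Ha.
  + move=> [Ax H]; split=> // y; rewrite Ha => Ay; apply/le_set_pt; exact: H.
- eexists; split.
    apply: (Def_and HPa (Def_not (Def_pex (Def_and (Def_not (Def_le z 1 0))
              (Def_pall (Def_imp (Def_and (Def_le z 1 0) (Def_le z 0 2)) (Def_keep0 3 HPa))))))).
  move=> s x /=; rewrite Ha /lends; split.
  + move=> [Ax H]; split=> // -[y [hyx Hy]]; apply: H; exists y; split.
      by move/le_set_pt; rewrite leNgt hyx.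
    move=> w [/le_set_pt h1 /le_set_pt h2]; rewrite Ha; apply: Hy; by rewrite h1 h2.
  + move=> [Ax H]; split=> // -[y [hyx Hy]]; apply: H; exists y; split.
      by rewrite ltNge; apply/negP => /le_set_pt.
    move=> w /andP [h1 h2]; rewrite -Ha; apply: Hy; split; exact/le_set_pt.
- eexists; split.
    apply: (Def_and HPa (Def_not (Def_pex (Def_and (Def_not (Def_le z 0 1))
              (Def_pall (Def_imp (Def_and (Def_le z 2 0) (Def_le z 0 1)) (Def_keep0 3 HPa))))))).
  move=> s x /=; rewrite Ha /rends; split.
  + move=> [Ax H]; split=> // -[y [hyx Hy]]; apply: H; exists y; split.
      by move/le_set_pt; rewrite leNgt hyx.
    move=> w [/le_set_pt h1 /le_set_pt h2]; rewrite Ha; apply: Hy; by rewrite h1 h2.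
  + move=> [Ax H]; split=> // -[y [hyx Hy]]; apply: H; exists y; split.
      by rewrite ltNge; apply/negP => /le_set_pt.
    move=> w /andP [h1 h2]; rewrite -Ha; apply: Hy; split; exact/le_set_pt.
Qed.

End Tr.

Section Fm.
Variables (d : Order.disp_t) (T : orderType d) (z : T).
Hypothesis hz : forall x : T, z <= x.
Hypothesis hnomax : forall x : T, exists y : T, x < y.

Lemma formdef (phi : fo Lterm) : Def z (fun s => satL z (decenv s) phi).
Proof.
elim: phi => [a b|g IH|g IHg h IHh|g IHg h IHh|g IHg h IHh|g IH|g IH].
- case: (termdef z a) => Pa [HPa Ha]; case: (termdef z b) => Pb [HPb Hb].
  apply: Def_ext (Def_pall (Def_iff HPa HPb)) => s /=; rewrite /satL /=.
  by split=> H x; move: (H x); rewrite Ha Hb.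
- by apply: Def_ext (Def_not IH) => s.
- by apply: Def_ext (Def_and IHg IHh) => s.
- by apply: Def_ext (Def_or IHg IHh) => s.
- by apply: Def_ext (Def_imp IHg IHh) => s.
- apply: Def_ext (Def_ex (Def_ex IH)) => s /=; rewrite /satL /=; split.
  + move=> [A [HA H]]; exists (rends A); split.
      by case: HA => n [f Hf]; exact: (rends_fin hz hnomax Hf).
    exists (lends A); split.
      by case: HA => n [f Hf]; exact: (lends_fin hz Hf).
    by rewrite decenv_scons (decode_ends hz HA).
  + move=> [R [fR [L [fL H]]]]; exists (decode L R); split.
      exact: (decode_fucl z fL fR).
    by rewrite -decenv_scons.
- apply: Def_ext (Def_all (Def_all IH)) => s /=; rewrite /satL /=; split.
  + move=> H R fR L fL; rewrite decenv_scons; apply: H; exact: (decode_fucl z fL fR).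
  + move=> H A HA; have := H (rends A) _ (lends A) _.
    rewrite decenv_scons (decode_ends hz HA); apply.
      by case: HA => n [f Hf]; exact: (rends_fin hz hnomax Hf).
    by case: HA => n [f Hf]; exact: (lends_fin hz Hf).
Qed.
End Fm.

Unset Implicit Arguments.

Theorem corollary6p5 (d : Order.disp_t) (T : orderType d) (z : T)
  (hz : forall x : T, (z <= x)%O)
  (hdense : forall x y : T, (x < y)%O -> exists w : T, (x < w)%O /\ (w < y)%O)
  (hnomax : forall x : T, exists y : T, (x < y)%O)
  (phi : fo Lterm) :
  exists psi : fo Wterm,
    forall rho : env T, (forall k, fucl (rho k)) ->
      (satL z rho phi <-> satW z (endpoint_env rho) psi).
Proof.
case: (formdef hz hnomax phi) => psi Hpsi.
exists psi => rho Hrho.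
by rewrite -Hpsi (decenv_endpoint hz Hrho).
Qed.
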